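(* Let $X$ be a proper CAT(0)-space and $g$ an isometry of $X$ with unbounded orbits. Then the centralizer of $g$ in the isometry group of $X$ fixes a point in the visual boundary $\partial X$ of $X$.
   Context: A metric space is proper if closed bounded sets are compact. The visual boundary $\partial X$ of a proper CAT(0)-space is the set of equivalence classes of geodesic rays (two rays equivalent if at bounded distance), with the cone topology; isometries act on it naturally. *)

(* Defs.v *)
From Stdlib Require Import Reals List.
Open Scope R_scope.
Import ListNotations.

Section MetricDefs.
Variable X : Type.
Variable d : X -> X -> R.

Definition is_metric : Prop :=
  (forall x y, 0 <= d x y) /\
  (forall x y, d x y = 0 <-> x = y) /\
  (forall x y, d x y = d y x) /\
  (forall x y z, d x z <= d x y + d y z).

Definition m_open (U : X -> Prop) : Prop :=
  forall x, U x -> exists e, 0 < e /\ forall y, d x y < e -> U y.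

Definition m_closed (S : X -> Prop) : Prop := m_open (fun x => ~ S x).

Definition m_bounded (S : X -> Prop) : Prop :=
  exists x0 M, forall y, S y -> d x0 y <= M.

Definition m_compact (S : X -> Prop) : Prop :=
  forall (I : Type) (U : I -> X -> Prop),
    (forall i, m_open (U i)) ->
    (forall x, S x -> exists i, U i x) ->
    exists l : list I, forall x, S x -> exists i, In i l /\ U i x.

Definition proper_space : Prop :=
  forall S, m_closed S -> m_bounded S -> m_compact S.

Definition geodesic_seg (c : R -> X) (x y : X) : Prop :=
  c 0 = x /\ c (d x y) = y /\
  forall s t, 0 <= s <= d x y -> 0 <= t <= d x y -> d (c s) (c t) = Rabs (s - t).

Definition geodesic_space : Prop :=
  forall x y, exists c, geodesic_seg c x y.

End MetricDefs.

Definition e2dist (p q : R * R) : R :=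
  sqrt ((fst p - fst q) ^ 2 + (snd p - snd q) ^ 2).

Definition seg_pt (a b : R * R) (L s : R) : R * R :=
  (fst a + (s / L) * (fst b - fst a), snd a + (s / L) * (snd b - snd a)).

Definition CAT0 (X : Type) (d : X -> X -> R) : Prop :=
  is_metric X d /\ geodesic_space X d /\
  forall (x y z : X) (cxy cyz czx : R -> X),
    geodesic_seg X d cxy x y -> geodesic_seg X d cyz y z -> geodesic_seg X d czx z x ->
    forall xb yb zb : R * R,
      e2dist xb yb = d x y -> e2dist yb zb = d y z -> e2dist zb xb = d z x ->
      let sides := [(cxy, d x y, xb, yb); (cyz, d y z, yb, zb); (czx, d z x, zb, xb)] in
      forall S1 S2 s t,
        In S1 sides -> In S2 sides ->
        match S1, S2 with
        | (c1, L1, a1, b1), (c2, L2, a2, b2) =>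
            0 <= s <= L1 -> 0 <= t <= L2 ->
            d (c1 s) (c2 t) <= e2dist (seg_pt a1 b1 L1 s) (seg_pt a2 b2 L2 t)
        end.

Definition isometry (X : Type) (d : X -> X -> R) (g : X -> X) : Prop :=
  (forall x y, d (g x) (g y) = d x y) /\ (forall y, exists x, g x = y).

(** The <g>-orbit of x: { g^n x | n in Z }. *)
Definition orbit (X : Type) (g : X -> X) (x : X) (y : X) : Prop :=
  exists n : nat, y = Nat.iter n g x \/ x = Nat.iter n g y.

Definition unbounded_orbits (X : Type) (d : X -> X -> R) (g : X -> X) : Prop :=
  exists x, ~ m_bounded X d (orbit X g x).

(** Geodesic rays and asymptoticity (points of the visual boundary are classes). *)
Definition geodesic_ray (X : Type) (d : X -> X -> R) (c : R -> X) : Prop :=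
  forall s t, 0 <= s -> 0 <= t -> d (c s) (c t) = Rabs (s - t).

Definition asymptotic (X : Type) (d : X -> X -> R) (c c' : R -> X) : Prop :=
  exists M, forall t, 0 <= t -> d (c t) (c' t) <= M.

(** The isometry h fixes the boundary point [c] (action: [c] |-> [h o c]). *)
Definition fixes_boundary_point (X : Type) (d : X -> X -> R) (h : X -> X) (c : R -> X) : Prop :=
  asymptotic X d (fun t => h (c t)) c.

Definition centralizer (X : Type) (d : X -> X -> R) (g : X -> X) (h : X -> X) : Prop :=
  isometry X d h /\ forall x, h (g x) = g (h x).

(* Main.v *)
Require Import Defs.
From Stdlib Require Import Reals Lra Lia Psatz List ClassicalEpsilon Classical ZArith.
Open Scope R_scope.
Import ListNotations.

Lemma rev_geo (X : Type) (d : X -> X -> R) (c : R -> X) x y :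
  is_metric X d -> geodesic_seg X d c x y ->
  geodesic_seg X d (fun s => c (d x y - s)) y x.
Proof.
  intros [H0 [H1 [Hs Ht]]] [Ha [Hb Hc]].
  unfold geodesic_seg. rewrite (Hs y x). split; [|split].
  - now replace (d x y - 0) with (d x y) by ring.
  - now replace (d x y - d x y) with 0 by ring.
  - intros s t Hs1 Ht1. rewrite Hc by lra.
    replace (d x y - s - (d x y - t)) with (-(s - t)) by ring. apply Rabs_Ropp.
Qed.

Lemma restr_geo (X : Type) (d : X -> X -> R) (c : R -> X) x y K :
  geodesic_seg X d c x y -> 0 <= K <= d x y ->
  geodesic_seg X d c x (c K) /\ d x (c K) = K.
Proof.
  intros [Ha [Hb Hc]] HK.
  assert (E : d x (c K) = K).
  { rewrite <- Ha at 1. rewrite Hc by lra. replace (0 - K) with (-K) by ring.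
    rewrite Rabs_Ropp. apply Rabs_right. lra. }
  split; auto. unfold geodesic_seg. rewrite E. split; [|split]; auto.
  intros s t Hs Ht. apply Hc; lra.
Qed.

Lemma cat0_tri (X : Type) (d : X -> X -> R) x y z (c c' : R -> X) a :
  CAT0 X d -> geodesic_seg X d c x y -> geodesic_seg X d c' x z -> 0 <= a <= 1 ->
  d (c (a * d x y)) (c' (a * d x z)) <= a * d y z.
Proof.
  intros HC Hc Hc' Ha.
  destruct HC as [HM [HG HT]].
  pose proof HM as [H0 [H1 [Hs Htr]]].
  destruct (Req_dec (d x y) 0) as [Ep|Ep].
  { rewrite Ep, Rmult_0_r. destruct Hc as [Hc0 _]. rewrite Hc0.
    destruct Hc' as [Hc'0 [_ Hc'd]]. rewrite <- Hc'0 at 1.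
    rewrite Hc'd by (pose proof (H0 x z); nra).
    apply H1 in Ep. subst y.
    replace (0 - a * d x z) with (-(a * d x z)) by ring. rewrite Rabs_Ropp.
    rewrite Rabs_right by (pose proof (H0 x z); nra). lra. }
  destruct (Req_dec (d x z) 0) as [Eq|Eq].
  { rewrite Eq, Rmult_0_r. destruct Hc' as [Hc0 _]. rewrite Hc0.
    destruct Hc as [Hc'0 [_ Hc'd]]. rewrite <- Hc'0 at 2.
    rewrite Hc'd by (pose proof (H0 x y); nra).
    apply H1 in Eq. subst z.
    replace (a * d x y - 0) with (a * d x y) by ring.
    rewrite Rabs_right by (pose proof (H0 x y); nra). rewrite Hs. lra. }
  set (p := d x y) in *. set (q := d x z) in *. set (r := d y z).
  assert (pp : 0 < p) by (pose proof (H0 x y); unfold p in *; lra).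
  assert (qp : 0 < q) by (pose proof (H0 x z); unfold q in *; lra).
  assert (r0 : 0 <= r) by apply H0.
  assert (T1 : r <= p + q) by (unfold r, p, q; pose proof (Htr y x z) as HH; rewrite (Hs y x) in HH; lra).
  assert (T2 : p <= q + r) by (unfold r, p, q; pose proof (Htr x z y) as HH; rewrite (Hs z y) in HH; lra).
  assert (T3 : q <= p + r) by (unfold r, p, q; apply Htr).
  set (u := (p*p + q*q - r*r) / (2*p)).
  assert (Hu : u * (2*p) = p*p+q*q-r*r) by (unfold u; field; lra).
  assert (Hv : 0 <= q*q - u*u).
  { assert (u <= q /\ -q <= u).
    { split; apply (Rmult_le_reg_r (2*p)); try lra; rewrite ?Hu; try nra. }
    nra. }
  set (v := sqrt (q*q - u*u)).
  assert (Hvv : v * v = q*q - u*u) by (apply sqrt_sqrt; lra).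
  destruct (HG y z) as [cyz Hyz].
  pose proof (rev_geo X d c' x z HM Hc') as Hzx.
  specialize (HT x y z c cyz _ Hc Hyz Hzx (0,0) (p,0) (u,v)).
  assert (E1 : e2dist (0,0) (p,0) = d x y).
  { unfold e2dist; cbn [fst snd]. replace ((0-p)^2 + (0-0)^2) with (p*p) by ring.
    rewrite sqrt_square; [reflexivity|lra]. }
  assert (E2 : e2dist (p,0) (u,v) = d y z).
  { unfold e2dist; cbn [fst snd]. replace ((p-u)^2 + (0-v)^2) with (r*r) by nra.
    rewrite sqrt_square; [reflexivity|lra]. }
  assert (E3 : e2dist (u,v) (0,0) = d z x).
  { unfold e2dist; cbn [fst snd]. rewrite Hs. replace ((u-0)^2 + (v-0)^2) with (q*q) by nra.
    rewrite sqrt_square; [reflexivity|lra]. }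
  specialize (HT E1 E2 E3).
  simpl in HT.
  specialize (HT (c, d x y, (0,0), (p,0)) (fun s => c' (d x z - s), d z x, (u,v), (0,0))
                 (a * p) ((1 - a) * q)).
  simpl in HT.
  assert (Ez : d z x = q) by (unfold q; apply Hs).
  rewrite Ez in HT.
  specialize (HT (or_introl eq_refl) (or_intror (or_intror (or_introl eq_refl)))).
  simpl in HT.
  assert (A1 : 0 <= a * p <= p) by nra.
  assert (A2 : 0 <= (1-a) * q <= q) by nra.
  specialize (HT A1 A2).
  change (d x z) with q in HT. change (d x y) with p in HT.
  replace (q - (1-a)*q) with (a*q) in HT by ring.
  eapply Rle_trans; [exact HT|].
  unfold e2dist, seg_pt; cbn [fst snd].
  replace (a*p/p) with a by (field; lra).
  replace ((1-a)*q/q) with (1-a) by (field; lra).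
  replace ((0 + a * (p - 0) - (u + (1 - a) * (0 - u))) ^ 2 +
     (0 + a * (0 - 0) - (v + (1 - a) * (0 - v))) ^ 2) with ((a*r)*(a*r)) by nra.
  rewrite sqrt_square; nra.
Qed.
Lemma nat_unbounded (r : R) : exists n : nat, r < INR n.
Proof.
  destruct (archimed r) as [H1 _].
  destruct (Z_le_gt_dec 0 (up r)) as [Hz|Hz].
  - exists (Z.to_nat (up r)). rewrite INR_IZR_INZ, Z2Nat.id by lia. lra.
  - exists 0%nat. simpl. apply Z.gt_lt in Hz. apply IZR_lt in Hz. lra.
Qed.

Lemma le_eps (a b : R) : (forall e, 0 < e -> a <= b + e) -> a <= b.
Proof. intros H. destruct (Rle_dec a b); auto. specialize (H ((a-b)/2)). lra. Qed.

Definition infinite (P : nat -> Prop) := forall N, exists n, (N <= n)%nat /\ P n.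

Lemma ball_open (X : Type) (d : X -> X -> R) p e :
  is_metric X d -> m_open X d (fun y => d p y < e).
Proof.
  intros [H0 [H1 [Hs Ht]]] y Hy. exists (e - d p y). split; [lra|].
  intros z Hz. pose proof (Ht p y z). lra.
Qed.

Lemma cball_closed (X : Type) (d : X -> X -> R) p r :
  is_metric X d -> m_closed X d (fun y => d p y <= r).
Proof.
  intros [H0 [H1 [Hs Ht]]] y Hy. exists (d p y - r). split; [lra|].
  intros z Hz. pose proof (Ht p z y). rewrite (Hs z y) in H. lra.
Qed.

Lemma cball_compact (X : Type) (d : X -> X -> R) p r :
  is_metric X d -> proper_space X d -> m_compact X d (fun y => d p y <= r).
Proof.
  intros HM HP. apply HP. apply cball_closed; auto. exists p, r; auto.
Qed.

Lemma cluster (X : Type) (d : X -> X -> R) (x : nat -> X) (K : X -> Prop) (P : nat -> Prop) :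
  is_metric X d -> m_compact X d K -> infinite P -> (forall n, P n -> K (x n)) ->
  exists p, forall e, 0 < e -> infinite (fun n => P n /\ d p (x n) < e).
Proof.
  intros HM HK HP HPK. apply NNPP. intro Hn.
  set (I := {p : X & {e : R | 0 < e /\ exists N, forall n, (N <= n)%nat -> P n -> ~ d p (x n) < e}}).
  set (U := fun (i : I) y => d (projT1 i) y < proj1_sig (projT2 i)).
  destruct (HK I U) as [l Hl].
  - intros i. apply ball_open; auto.
  - intros y Hy. assert (Hy' : ~ forall e, 0 < e -> infinite (fun n => P n /\ d y (x n) < e)).
    { intro HH. apply Hn. exists y. auto. }
    apply not_all_ex_not in Hy'. destruct Hy' as [e He].
    apply imply_to_and in He. destruct He as [He Hinf].
    apply not_all_ex_not in Hinf. destruct Hinf as [N HN].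
    assert (HN' : forall n, (N <= n)%nat -> P n -> ~ d y (x n) < e).
    { intros n Hn1 Hn2 Hn3. apply HN. exists n. auto. }
    exists (existT _ y (exist _ e (conj He (ex_intro _ N HN')))).
    unfold U. simpl.
    destruct HM as [_ [H1 _]]. assert (d y y = 0) by (apply H1; auto). lra.
  - assert (HB : forall l : list I, exists N, forall i, In i l -> forall n, (N <= n)%nat -> P n -> ~ U i (x n)).
    { induction l0 as [|i l0 IH].
      - exists 0%nat. intros i [].
      - destruct IH as [N HN]. destruct (projT2 i) as [e [He [N' HN']]] eqn:Ei.
        exists (Nat.max N N'). intros j [<-|Hj] n Hn1 Hn2.
        + unfold U. rewrite Ei. simpl. apply HN'; auto. lia.
        + apply (HN j Hj n); auto. lia. }
    destruct (HB l) as [N HN]. destruct (HP N) as [n [Hn1 Hn2]].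
    destruct (Hl (x n) (HPK n Hn2)) as [i [Hi1 Hi2]].
    exact (HN i Hi1 n Hn1 Hn2 Hi2).
Qed.
Lemma complete_seq (X : Type) (d : X -> X -> R) (y : nat -> X) :
  is_metric X d -> proper_space X d ->
  (forall e, 0 < e -> exists N, forall k1 k2, (N <= k1)%nat -> (N <= k2)%nat -> d (y k1) (y k2) < e) ->
  exists p, forall e, 0 < e -> exists N, forall k, (N <= k)%nat -> d p (y k) < e.
Proof.
  intros HM HP HC. pose proof HM as [H0 [H1 [Hs Ht]]].
  destruct (HC 1 Rlt_0_1) as [N0 HN0].
  destruct (cluster X d y (fun z => d (y N0) z <= 1) (fun k => (N0 <= k)%nat) HM
     (cball_compact X d (y N0) 1 HM HP)) as [p Hp].
  - intros N. exists (Nat.max N N0). split; lia.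
  - intros n Hn. left. apply HN0; lia.
  - exists p. intros e He. destruct (HC (e/2) ltac:(lra)) as [N HN].
    exists N. intros k Hk. destruct (Hp (e/2) ltac:(lra) N) as [n [Hn1 [Hn2 Hn3]]].
    pose proof (Ht p (y n) (y k)). specialize (HN n k Hn1 Hk). lra.
Qed.

Lemma iter_dist (X : Type) (d : X -> X -> R) (g : X -> X) :
  (forall x y, d (g x) (g y) = d x y) -> forall n a b, d (Nat.iter n g a) (Nat.iter n g b) = d a b.
Proof. intros Hg n; induction n; intros; simpl; auto. rewrite Hg; auto. Qed.

Lemma iter_comm (X : Type) (g h : X -> X) :
  (forall x, h (g x) = g (h x)) -> forall n a, h (Nat.iter n g a) = Nat.iter n g (h a).
Proof. intros Hc n; induction n; intros; simpl; auto. rewrite Hc, IHn; auto. Qed.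

Lemma key (X : Type) (d : X -> X -> R) (g h : X -> X) x0 n (c : R -> X) s :
  CAT0 X d -> isometry X d g -> centralizer X d g h ->
  geodesic_seg X d c x0 (Nat.iter n g x0) -> 0 <= s <= d x0 (Nat.iter n g x0) ->
  d (h (c s)) (c s) <= d (h x0) x0.
Proof.
  intros HC [Hg _] [[Hh _] Hcomm] Hc Hsr.
  pose proof HC as [HM [HG _]]. pose proof HM as [H0 [H1 [Hs Ht]]].
  set (y := Nat.iter n g x0) in *. set (L := d x0 y) in *.
  destruct (Req_dec L 0) as [EL|EL].
  { assert (s = 0) by lra. subst s. destruct Hc as [-> _]. lra. }
  assert (Lp : 0 < L) by (pose proof (H0 x0 y); unfold L in *; lra).
  set (a := s / L).
  assert (Ha : 0 <= a <= 1).
  { unfold a. split. apply Rmult_le_pos; [lra|]. left; apply Rinv_0_lt_compat; lra.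
    apply (Rmult_le_reg_r L); auto. field_simplify; lra. }
  assert (Eas : a * L = s) by (unfold a; field; lra).
  assert (Hhc : geodesic_seg X d (fun t => h (c t)) (h x0) (h y)).
  { destruct Hc as [Hc0 [Hc1 Hc2]]. unfold geodesic_seg. rewrite Hh.
    split; [|split]. now rewrite Hc0. now rewrite Hc1.
    intros; rewrite Hh; auto. }
  destruct (HG x0 (h y)) as [c2 Hc2].
  assert (Dy : d y (h y) = d x0 (h x0)).
  { unfold y. rewrite iter_comm by auto. apply iter_dist; auto. }
  pose proof (cat0_tri X d x0 y (h y) c c2 a HC Hc Hc2 Ha) as A.
  rewrite Dy in A. change (d x0 y) with L in A. rewrite Eas in A.
  pose proof (rev_geo X d _ _ _ HM Hhc) as R1. cbv beta in R1.
  pose proof (rev_geo X d _ _ _ HM Hc2) as R2.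
  assert (Hb : 0 <= 1 - a <= 1) by lra.
  pose proof (cat0_tri X d (h y) (h x0) x0 _ _ (1-a) HC R1 R2 Hb) as B.
  cbv beta in B.
  rewrite !Hh in B. rewrite (Hs y x0) in B. change (d x0 y) with L in B.
  rewrite (Hs (h y) x0) in B.
  replace (L - (1-a) * L) with s in B by lra.
  replace (d x0 (h y) - (1 - a) * d x0 (h y)) with (a * d x0 (h y)) in B by ring.
  pose proof (Ht (h (c s)) (c2 (a * d x0 (h y))) (c s)).
  rewrite (Hs (c2 (a * d x0 (h y))) (c s)) in H.
  rewrite (Hs x0 (h x0)) in A.
  nra.
Qed.

Theorem proposition19 (X : Type) (d : X -> X -> R) (g : X -> X) :
  CAT0 X d -> proper_space X d ->
  isometry X d g -> unbounded_orbits X d g ->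
  exists c : R -> X, geodesic_ray X d c /\
    forall h : X -> X, centralizer X d g h -> fixes_boundary_point X d h c.
Proof.
  intros HC Hp Hg [x0 Hub].
  pose proof HC as [HM [HG _]]. pose proof HM as [H0 [H1 [Hs Ht]]].
  pose proof Hg as [Hgd _].
  assert (Hunb : forall M, exists n, M < d x0 (Nat.iter n g x0)).
  { intros M. apply NNPP. intro HH. apply Hub. exists x0, M.
    intros y [n [Hy | Hy]].
    - subst y. apply Rnot_lt_le. intro. apply HH. eauto.
    - assert (E : d x0 y = d (Nat.iter n g x0) x0).
      { rewrite <- (iter_dist X d g Hgd n x0 y). rewrite <- Hy. reflexivity. }
      rewrite E. apply Rnot_lt_le. intro. apply HH. exists n. rewrite Hs. auto. }
  set (m := fun j : nat => proj1_sig (constructive_indefinite_description _ (Hunb (INR j)))).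
  assert (Hm : forall j, INR j < d x0 (Nat.iter (m j) g x0)).
  { intros j. unfold m. destruct (constructive_indefinite_description _ _); auto. }
  set (G := fun j : nat => proj1_sig (constructive_indefinite_description _ (HG x0 (Nat.iter (m j) g x0)))).
  assert (HGj : forall j, geodesic_seg X d (G j) x0 (Nat.iter (m j) g x0)).
  { intros j. unfold G. destruct (constructive_indefinite_description _ _); auto. }
  assert (Hrad : forall j (t : R), 0 <= t <= INR j -> d x0 (G j t) = t).
  { intros j t Ht0. pose proof (Hm j).
    apply (restr_geo X d (G j) x0 _ t (HGj j)). lra. }
  assert (step : forall (k : nat) (P : nat -> Prop), infinite P ->
     {Q : nat -> Prop | infinite Q /\ (forall j, Q j -> P j /\ (k <= j)%nat) /\
        forall i j, Q i -> Q j -> d (G i (INR k)) (G j (INR k)) < 2}).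
  { intros k P HP. apply constructive_indefinite_description.
    destruct (cluster X d (fun n => G n (INR k)) (fun z => d x0 z <= INR k)
                (fun j => P j /\ (k <= j)%nat) HM (cball_compact X d x0 (INR k) HM Hp))
      as [p Hpc].
    - intros N. destruct (HP (Nat.max N k)) as [n [Hn1 Hn2]]. exists n. repeat split; auto; lia.
    - intros n [_ Hn]. rewrite Hrad. lra. split. apply pos_INR. apply le_INR; auto.
    - exists (fun j => (P j /\ (k <= j)%nat) /\ d p (G j (INR k)) < 1). split; [|split].
      + apply Hpc. lra.
      + intros j [A _]; auto.
      + intros i j [_ Hi] [_ Hj]. pose proof (Ht (G i (INR k)) p (G j (INR k))).
        rewrite (Hs (G i (INR k)) p) in H. lra. }
  assert (inf0 : infinite (fun _ => True)) by (intros N; exists N; auto).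
  pose (PP := nat_rect (fun _ => {P : nat -> Prop | infinite P})
                (exist _ (fun _ => True) inf0)
                (fun k PPk => exist _ (proj1_sig (step (S k) (proj1_sig PPk) (proj2_sig PPk)))
                                      (proj1 (proj2_sig (step (S k) (proj1_sig PPk) (proj2_sig PPk)))))).
  assert (PPS : forall k, proj1_sig (PP (S k)) = proj1_sig (step (S k) (proj1_sig (PP k)) (proj2_sig (PP k)))) by reflexivity.
  assert (PPspec : forall k, (forall j, proj1_sig (PP (S k)) j -> proj1_sig (PP k) j /\ (S k <= j)%nat) /\
             forall i j, proj1_sig (PP (S k)) i -> proj1_sig (PP (S k)) j -> d (G i (INR (S k))) (G j (INR (S k))) < 2).
  { intros k. rewrite PPS. pose proof (proj2_sig (step (S k) (proj1_sig (PP k)) (proj2_sig (PP k)))) as [_ [A B]].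
    split; auto. }
  assert (PPmono : forall k k', (k <= k')%nat -> forall j, proj1_sig (PP k') j -> proj1_sig (PP k) j).
  { intros k k' Hk. induction Hk as [|k2 Hk IH]; auto. intros j Hj. apply IH. apply (proj1 (PPspec k2)); auto. }
  assert (PPge : forall k j, proj1_sig (PP k) j -> (k <= j)%nat).
  { intros [|k] j Hj. lia. apply (proj1 (PPspec k)); auto. }
  set (ns := fun k => proj1_sig (constructive_indefinite_description _ (proj2_sig (PP k) 0%nat))).
  assert (Hns : forall k, proj1_sig (PP k) (ns k)).
  { intros k. exact (proj2 (proj2_sig (constructive_indefinite_description _ (proj2_sig (PP k) 0%nat)))). }
  assert (Hnsge : forall k, (k <= ns k)%nat) by (intros; apply PPge, Hns).
  assert (Hlen : forall k (t : R), 0 <= t <= INR k -> 0 <= t <= d x0 (Nat.iter (m (ns k)) g x0)).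
  { intros k t Hk. pose proof (Hm (ns k)). pose proof (le_INR _ _ (Hnsge k)). lra. }
  assert (Cauchy : forall t, 0 <= t -> forall e, 0 < e -> exists N, forall k1 k2, (N <= k1)%nat -> (N <= k2)%nat ->
                     d (G (ns k1) t) (G (ns k2) t) < e).
  { intros t Ht0 e He.
    destruct (nat_unbounded (2 * t / e + t + 1)) as [K0 HK0].
    assert (Hde : 0 <= 2 * t / e) by (apply Rmult_le_pos; [lra| left; apply Rinv_0_lt_compat; lra]).
    destruct K0 as [|K]. { simpl in HK0. lra. }
    exists (S K). intros k1 k2 Hk1 Hk2.
    set (KK := INR (S K)) in *.
    assert (KKp : 0 < KK) by lra.
    assert (R1 : forall k, (S K <= k)%nat -> geodesic_seg X d (G (ns k)) x0 (G (ns k) KK) /\ d x0 (G (ns k) KK) = KK).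
    { intros k Hk. apply restr_geo with (y := Nat.iter (m (ns k)) g x0); auto.
      apply Hlen. split. lra. apply le_INR; auto. }
    destruct (R1 k1 Hk1) as [Ga Ea]. destruct (R1 k2 Hk2) as [Gb Eb].
    assert (Ha : 0 <= t / KK <= 1).
    { split. apply Rmult_le_pos; [lra| left; apply Rinv_0_lt_compat; lra].
      apply (Rmult_le_reg_r KK); auto. field_simplify; lra. }
    pose proof (cat0_tri X d x0 _ _ _ _ (t / KK) HC Ga Gb Ha) as T.
    rewrite Ea, Eb in T. replace (t / KK * KK) with t in T by (field; lra).
    assert (D2 : d (G (ns k1) KK) (G (ns k2) KK) < 2).
    { apply (proj2 (PPspec K)).
      apply (PPmono (S K) k1 Hk1 (ns k1) (Hns k1)).
      apply (PPmono (S K) k2 Hk2 (ns k2) (Hns k2)). }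
    assert (t / KK * 2 <= e).
    { apply (Rmult_le_reg_r KK); auto. field_simplify; try lra.
      assert (2 * t <= e * KK).
      { apply (Rmult_le_reg_r (/ e)). apply Rinv_0_lt_compat; lra.
        replace (e * KK * / e) with KK by (field; lra). unfold Rdiv in HK0. lra. }
      lra. }
    pose proof (H0 (G (ns k1) KK) (G (ns k2) KK)).
    destruct (Req_dec t 0) as [Z|Z].
    - subst t. assert (0/KK = 0) by (field; lra). rewrite H3 in T. lra.
    - assert (0 < t / KK) by (apply Rmult_lt_0_compat; [lra| apply Rinv_0_lt_compat; lra]). nra. }
  assert (Hlim : forall t, exists p, 0 <= t -> forall e, 0 < e -> exists N, forall k, (N <= k)%nat -> d p (G (ns k) t) < e).
  { intros t. destruct (Rle_dec 0 t) as [Ht0|Ht0].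
    - destruct (complete_seq X d (fun k => G (ns k) t) HM Hp (Cauchy t Ht0)) as [p Hp'].
      exists p. auto.
    - exists x0. intros; lra. }
  set (c := fun t => proj1_sig (constructive_indefinite_description _ (Hlim t))).
  assert (Hc : forall t, 0 <= t -> forall e, 0 < e -> exists N, forall k, (N <= k)%nat -> d (c t) (G (ns k) t) < e).
  { intros t. unfold c. destruct (constructive_indefinite_description _ _); auto. }
  assert (big : forall t e, 0 <= t -> 0 < e -> exists N, forall k, (N <= k)%nat ->
             0 <= t <= d x0 (Nat.iter (m (ns k)) g x0) /\ d (c t) (G (ns k) t) < e).
  { intros t e Ht0 He. destruct (Hc t Ht0 e He) as [N HN]. destruct (nat_unbounded t) as [K HK].
    exists (Nat.max N K). intros k Hk. split; [|apply HN; lia]. apply Hlen. split; auto.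
    pose proof (le_INR K k ltac:(lia)). lra. }
  exists c. split.
  - intros s t Hs0 Ht0. apply Rle_antisym; apply le_eps; intros e He.
    + destruct (big s (e/2) Hs0 ltac:(lra)) as [N1 HN1]. destruct (big t (e/2) Ht0 ltac:(lra)) as [N2 HN2].
      destruct (HN1 (Nat.max N1 N2) ltac:(lia)) as [A1 B1]. destruct (HN2 (Nat.max N1 N2) ltac:(lia)) as [A2 B2].
      destruct (HGj (ns (Nat.max N1 N2))) as [_ [_ Gd]]. rewrite <- (Gd s t A1 A2).
      pose proof (Ht (c s) (G (ns (Nat.max N1 N2)) s) (c t)).
      pose proof (Ht (G (ns (Nat.max N1 N2)) s) (G (ns (Nat.max N1 N2)) t) (c t)).
      rewrite (Hs (G (ns (Nat.max N1 N2)) t) (c t)) in H2. lra.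
    + destruct (big s (e/2) Hs0 ltac:(lra)) as [N1 HN1]. destruct (big t (e/2) Ht0 ltac:(lra)) as [N2 HN2].
      destruct (HN1 (Nat.max N1 N2) ltac:(lia)) as [A1 B1]. destruct (HN2 (Nat.max N1 N2) ltac:(lia)) as [A2 B2].
      destruct (HGj (ns (Nat.max N1 N2))) as [_ [_ Gd]]. rewrite <- (Gd s t A1 A2).
      pose proof (Ht (G (ns (Nat.max N1 N2)) s) (c s) (G (ns (Nat.max N1 N2)) t)).
      pose proof (Ht (c s) (c t) (G (ns (Nat.max N1 N2)) t)).
      rewrite (Hs (G (ns (Nat.max N1 N2)) s) (c s)) in H. lra.
  - intros h Hh. exists (d (h x0) x0). intros t Ht0. apply le_eps. intros e He.
    destruct (big t (e/2) Ht0 ltac:(lra)) as [N HN]. destruct (HN N (le_n N)) as [A B].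
    pose proof (key X d g h x0 (m (ns N)) (G (ns N)) t HC Hg Hh (HGj (ns N)) A) as K.
    destruct Hh as [[Hhd _] _].
    pose proof (Ht (h (c t)) (h (G (ns N) t)) (c t)).
    pose proof (Ht (h (G (ns N) t)) (G (ns N) t) (c t)).
    rewrite Hhd in H. rewrite (Hs (G (ns N) t) (c t)) in H2. lra.
Qed.
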